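(* Let $d\ge3$, $|\lambda|\le 2\sqrt{d-1}$, and let $v_1,\dots,v_d,w\in\mathbb{R}^d$ be unit vectors with $(v_i,v_j)=(\lambda^2-d)/(d(d-1))$ for $i\ne j$ and $(v_i,w)=\lambda/d$ for all $i$. Let $\alpha,\beta\in\mathbb{R}$ be such that the vectors $a_i=\alpha w+\beta v_i$ and $b_i=\alpha v_i+\beta w$ satisfy $(a_i,b_i)=0$ and $\|a_i\|_2=\|b_i\|_2=1$ for all $1\le i\le d$. Then there are numbers $t_1,t_2\ge0$ with $t_1+t_2=1$ such that for every $u\in\mathbb{R}^d$, $$\|u\|_2^2=\sum_{i=1}^d\Big(t_1(u,a_i)^2+t_2(u,b_i)^2\Big).$$
   Context: $(\cdot,\cdot)$ denotes the standard inner product on $\mathbb{R}^d$. *)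

(* Defs.v *)
(* classical reals. Vectors of R^d are represented as
   functions nat -> R, of which only coordinates 0..d-1 matter. *)
From Stdlib Require Import Reals Lra Lia.
Open Scope R_scope.

Fixpoint rsum (n : nat) (f : nat -> R) : R :=
  match n with
  | O => 0
  | S m => rsum m f + f m
  end.

Definition dot (d : nat) (u v : nat -> R) : R := rsum d (fun k => u k * v k).

Definition nrm2 (d : nat) (u : nat -> R) : R := dot d u u.

Definition lc (a : R) (x : nat -> R) (b : R) (y : nat -> R) : nat -> R :=
  fun k => a * x k + b * y k.

(* Main.v *)
Require Import Defs.
From Stdlib Require Import Reals Lra Lia.
Open Scope R_scope.

Lemma rsum_ext n f g : (forall k, (k < n)%nat -> f k = g k) -> rsum n f = rsum n g.
Proof. induction n as [|n IH]; intros H; simpl; [reflexivity|].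
rewrite IH by (intros; apply H; lia). rewrite H by lia. reflexivity. Qed.

Lemma rsum_plus n f g : rsum n (fun k => f k + g k) = rsum n f + rsum n g.
Proof. induction n as [|n IH]; simpl; [lra|]. rewrite IH; ring. Qed.

Lemma rsum_scal n a f : rsum n (fun k => a * f k) = a * rsum n f.
Proof. induction n as [|n IH]; simpl; [ring|]. rewrite IH; ring. Qed.

Lemma rsum_scalr n a f : rsum n (fun k => f k * a) = rsum n f * a.
Proof. induction n as [|n IH]; simpl; [ring|]. rewrite IH; ring. Qed.

Lemma rsum_const n a : rsum n (fun _ => a) = INR n * a.
Proof. induction n as [|n IH]; simpl rsum; [simpl; ring|]. rewrite IH, S_INR; ring. Qed.

Lemma rsum_zero n : rsum n (fun _ => 0) = 0.
Proof. rewrite rsum_const; ring. Qed.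

Lemma rsum_swap n m f : rsum n (fun i => rsum m (fun j => f i j)) = rsum m (fun j => rsum n (fun i => f i j)).
Proof. induction n as [|n IH]; simpl.
- symmetry; apply rsum_zero.
- rewrite IH. rewrite <- rsum_plus. reflexivity. Qed.

Lemma rsum_if n i f g : (i < n)%nat ->
  rsum n (fun j => if Nat.eqb j i then f j else g j) = f i - g i + rsum n g.
Proof. induction n as [|n IH]; intros Hi; [lia|]. simpl.
destruct (Nat.eqb n i) eqn:E.
- apply Nat.eqb_eq in E; subst i.
  rewrite (rsum_ext n _ g). ring.
  intros k Hk. destruct (Nat.eqb k n) eqn:E2; [apply Nat.eqb_eq in E2; lia| reflexivity].
- apply Nat.eqb_neq in E. rewrite IH by lia. ring. Qed.

Lemma rsum_nonneg n f : (forall k, (k<n)%nat -> 0 <= f k) -> 0 <= rsum n f.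
Proof. induction n as [|n IH]; intros H; simpl; [lra|].
assert (0 <= rsum n f) by (apply IH; intros; apply H; lia). specialize (H n ltac:(lia)). lra. Qed.

Lemma rsum_eq0 n f : (forall k, (k<n)%nat -> 0 <= f k) -> rsum n f = 0 -> forall k, (k<n)%nat -> f k = 0.
Proof. induction n as [|n IH]; intros H Hs k Hk; [lia|]. simpl in Hs.
assert (0 <= rsum n f) by (apply rsum_nonneg; intros; apply H; lia).
assert (0 <= f n) by (apply H; lia).
destruct (Nat.eq_dec k n). subst; lra.
apply IH; [intros; apply H; lia| lra | lia]. Qed.

Lemma sq_rsum n f : (rsum n f)^2 = rsum n (fun k => rsum n (fun l => f k * f l)).
Proof. replace ((rsum n f)^2) with (rsum n f * rsum n f) by ring.
rewrite <- rsum_scalr. apply rsum_ext; intros. rewrite <- rsum_scal. reflexivity. Qed.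

Lemma dot_sym d x y : dot d x y = dot d y x.
Proof. unfold dot. apply rsum_ext; intros; ring. Qed.

Lemma dot_lc_l d a x b y z : dot d (lc a x b y) z = a * dot d x z + b * dot d y z.
Proof. unfold dot, lc. rewrite <- !rsum_scal, <- rsum_plus. apply rsum_ext; intros; ring. Qed.

Lemma dot_lc_r d a x b y z : dot d z (lc a x b y) = a * dot d z x + b * dot d z y.
Proof. rewrite dot_sym, dot_lc_l, (dot_sym d x), (dot_sym d y). reflexivity. Qed.

Definition Mv d (v : nat -> nat -> R) k l := rsum d (fun i => v i k * v i l).
Definition Nm d v (w : nat -> R) c D k l :=
  Mv d v k l - (1 - c) * (if Nat.eqb k l then 1 else 0) - c * D * (w k * w l).

Lemma Nm_sym d v w c D k l : Nm d v w c D k l = Nm d v w c D l k.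
Proof. unfold Nm, Mv. rewrite (Nat.eqb_sym k l).
rewrite (rsum_ext d (fun i => v i k * v i l) (fun i => v i l * v i k)) by (intros; ring). ring. Qed.
Lemma key d lam v w (c D : R) :
  D = INR d -> D <> 0 -> c * (D*(D-1)) = lam^2 - D ->
  (forall i, (i<d)%nat -> dot d (v i) (v i) = 1) -> dot d w w = 1 ->
  (forall i j, (i<d)%nat -> (j<d)%nat -> i<>j -> dot d (v i) (v j) = c) ->
  (forall i, (i<d)%nat -> dot d (v i) w = lam / D) ->
  (forall l, (l<d)%nat -> rsum d (fun j => v j l) = lam * w l) /\
  forall u, rsum d (fun i => (dot d u (v i))^2) = (1-c)*dot d u u + c*D*(dot d u w)^2.
Proof.
intros HD HD0 Hc Hv Hw Hvv Hvw.
assert (S1: forall i g, (i<d)%nat -> rsum d (fun j => dot d (v i) (v j) * g j) = (1-c)*g i + c*rsum d g).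
{ intros i g Hi. rewrite (rsum_ext d _ (fun j => if Nat.eqb j i then 1 * g j else c * g j)).
  - rewrite rsum_if by exact Hi. rewrite rsum_scal. ring.
  - intros j Hj. destruct (Nat.eqb j i) eqn:E.
    + apply Nat.eqb_eq in E; subst j. rewrite Hv by exact Hi. ring.
    + apply Nat.eqb_neq in E. rewrite Hvv by lia. reflexivity. }
assert (Hs_dot: forall z, rsum d (fun l => rsum d (fun j => v j l) * z l) = rsum d (fun j => dot d (v j) z)).
{ intros z. rewrite (rsum_ext d _ (fun l => rsum d (fun j => v j l * z l))).
  - rewrite rsum_swap. reflexivity.
  - intros; rewrite rsum_scalr; reflexivity. }
assert (Hsum_w : rsum d (fun l => rsum d (fun j => v j l) * w l) = lam).
{ rewrite Hs_dot. rewrite (rsum_ext d _ (fun _ => lam / D)) by (intros; apply Hvw; auto).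
  rewrite rsum_const, <- HD. field. exact HD0. }
assert (Hsum_s : rsum d (fun l => rsum d (fun j => v j l) * rsum d (fun j => v j l)) = lam^2).
{ rewrite Hs_dot.
  transitivity (rsum d (fun j => (1-c)*1 + c * rsum d (fun _ => 1))).
  - apply rsum_ext; intros j Hj. rewrite <- (S1 j (fun _ => 1) Hj). unfold dot.
    rewrite (rsum_ext d (fun k => v j k * rsum d (fun i => v i k)) (fun k => rsum d (fun i => v j k * v i k * 1)))
      by (intros; rewrite <- rsum_scal; apply rsum_ext; intros; ring).
    rewrite rsum_swap. apply rsum_ext; intros. rewrite rsum_scalr; reflexivity.
  - rewrite !rsum_const, <- HD.
    replace (D*((1-c)*1+c*(D*1))) with (D + c*(D*(D-1))) by ring. rewrite Hc; ring. }
assert (Hs: forall l, (l<d)%nat -> rsum d (fun j => v j l) = lam * w l).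
{ assert (H0: rsum d (fun l => (rsum d (fun j => v j l) - lam * w l)^2) = 0).
  { rewrite (rsum_ext d _ (fun l => rsum d (fun j => v j l) * rsum d (fun j => v j l) + (-2*lam) * (rsum d (fun j => v j l) * w l) + lam^2 * (w l * w l))) by (intros; ring).
    rewrite !rsum_plus, !rsum_scal, Hsum_s, Hsum_w. unfold dot in Hw. rewrite Hw. ring. }
  intros l Hl. pose proof (rsum_eq0 d _ (fun k _ => pow2_ge_0 _) H0 l Hl) as H. simpl in H.
  nra. }
split; [exact Hs|].
set (N := Nm d v w c D).
assert (F1: forall i l, (i<d)%nat -> (l<d)%nat -> rsum d (fun k => v i k * N l k) = 0).
{ intros i l Hi Hl.
  rewrite (rsum_ext d _ (fun k => v i k * N k l)) by (intros; unfold N; rewrite Nm_sym; reflexivity).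
  unfold N, Nm.
  rewrite (rsum_ext d _ (fun k => v i k * Mv d v k l + (-(1-c)) * (if Nat.eqb k l then v i k else 0) + (-(c*D*w l)) * (v i k * w k))).
  2:{ intros k Hk. destruct (Nat.eqb k l); ring. }
  rewrite !rsum_plus, !rsum_scal.
  rewrite rsum_if by exact Hl. rewrite rsum_zero.
  assert (E: rsum d (fun k => v i k * Mv d v k l) = rsum d (fun j => dot d (v i) (v j) * v j l)).
  { unfold Mv, dot. rewrite (rsum_ext d (fun k => v i k * rsum d (fun j => v j k * v j l)) (fun k => rsum d (fun j => v i k * v j k * v j l))).
    2:{ intros k Hk. rewrite <- rsum_scal. apply rsum_ext; intros; ring. }
    rewrite rsum_swap. apply rsum_ext; intros j Hj. rewrite <- rsum_scalr. apply rsum_ext; intros; ring. }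
  rewrite E, S1 by exact Hi. rewrite Hs by exact Hl.
  change (rsum d (fun k => v i k * w k)) with (dot d (v i) w). rewrite Hvw by exact Hi.
  field. exact HD0. }
assert (F2: forall l, (l<d)%nat -> rsum d (fun k => w k * N l k) = 0).
{ intros l Hl.
  rewrite (rsum_ext d _ (fun k => w k * N k l)) by (intros; unfold N; rewrite Nm_sym; reflexivity).
  unfold N, Nm.
  rewrite (rsum_ext d _ (fun k => w k * Mv d v k l + (-(1-c)) * (if Nat.eqb k l then w k else 0) + (-(c*D*w l)) * (w k * w k))).
  2:{ intros k Hk. destruct (Nat.eqb k l); ring. }
  rewrite !rsum_plus, !rsum_scal.
  rewrite rsum_if by exact Hl. rewrite rsum_zero.
  assert (E: rsum d (fun k => w k * Mv d v k l) = rsum d (fun j => (lam / D) * v j l)).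
  { unfold Mv. rewrite (rsum_ext d (fun k => w k * rsum d (fun j => v j k * v j l)) (fun k => rsum d (fun j => v j k * w k * v j l))).
    2:{ intros k Hk. rewrite <- rsum_scal. apply rsum_ext; intros; ring. }
    rewrite rsum_swap. apply rsum_ext; intros j Hj. rewrite rsum_scalr.
    change (rsum d (fun k => v j k * w k)) with (dot d (v j) w). rewrite Hvw by exact Hj. reflexivity. }
  rewrite E, rsum_scal, Hs by exact Hl.
  change (rsum d (fun k => w k * w k)) with (dot d w w). rewrite Hw.
  transitivity (w l / D * (lam^2 - D - c*(D*(D-1)))). field. exact HD0. rewrite Hc. ring. }
assert (trN: rsum d (fun k => N k k) = 0).
{ unfold N, Nm.
  rewrite (rsum_ext d _ (fun k => Mv d v k k + (-(1-c)) * 1 + (-(c*D)) * (w k * w k))).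
  2:{ intros k Hk. rewrite Nat.eqb_refl. ring. }
  rewrite !rsum_plus, !rsum_scal, rsum_const.
  change (rsum d (fun k => w k * w k)) with (dot d w w). rewrite Hw.
  unfold Mv. rewrite rsum_swap.
  rewrite (rsum_ext d _ (fun _ => 1)) by (intros; apply Hv; auto).
  rewrite rsum_const, <- HD. ring. }
assert (Row: forall k, (k<d)%nat -> rsum d (fun l => N k l * N k l) = -(1-c) * N k k).
{ intros k Hk.
  rewrite (rsum_ext d _ (fun l => rsum d (fun i => N k l * (v i k * v i l)) + (-(1-c)) * (if Nat.eqb l k then N k l else 0) + (-(c*D)) * (w k * (w l * N k l)))).
  2:{ intros l Hl. rewrite rsum_scal. change (rsum d (fun i => v i k * v i l)) with (Mv d v k l).
      assert (EN: N k l = Mv d v k l - (1-c)*(if Nat.eqb k l then 1 else 0) - c*D*(w k*w l)) by reflexivity.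
      rewrite (Nat.eqb_sym l k). set (x := N k l) in *.
      transitivity (x * (Mv d v k l - (1-c)*(if Nat.eqb k l then 1 else 0) - c*D*(w k*w l))).
      { f_equal; exact EN. }
      destruct (Nat.eqb k l); ring. }
  rewrite rsum_plus, rsum_plus, (rsum_scal d (-(1-c))), (rsum_scal d (-(c*D))).
  rewrite rsum_if by exact Hk. rewrite rsum_zero. rewrite rsum_scal.
  rewrite F2 by exact Hk.
  rewrite rsum_swap.
  rewrite (rsum_ext d _ (fun i => v i k * 0)).
  2:{ intros i Hi. rewrite <- (F1 i k Hi Hk). rewrite <- rsum_scal. apply rsum_ext; intros l Hl.
      ring. }
  rewrite (rsum_ext d _ (fun _ => 0)) by (intros; ring). rewrite rsum_zero. ring. }
assert (Nz: forall k l, (k<d)%nat -> (l<d)%nat -> N k l = 0).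
{ assert (Tot: rsum d (fun k => rsum d (fun l => N k l * N k l)) = 0).
  { rewrite (rsum_ext d _ (fun k => -(1-c) * N k k)) by (intros; apply Row; auto).
    rewrite rsum_scal, trN. ring. }
  intros k l Hk Hl.
  assert (Hr := rsum_eq0 d _ (fun k _ => rsum_nonneg d _ (fun l _ => Rle_0_sqr (N k l))) Tot k Hk).
  simpl in Hr.
  assert (Hx := rsum_eq0 d _ (fun l _ => Rle_0_sqr (N k l)) Hr l Hl). simpl in Hx. unfold Rsqr in Hx. nra. }
assert (HM: forall k l, (k<d)%nat -> (l<d)%nat -> Mv d v k l = (1-c)*(if Nat.eqb k l then 1 else 0) + c*D*(w k*w l)).
{ intros k l Hk Hl. pose proof (Nz k l Hk Hl) as H. unfold N, Nm in H. lra. }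
intros u.
transitivity (rsum d (fun k => rsum d (fun l => rsum d (fun i => u k * v i k * (u l * v i l))))).
{ rewrite (rsum_ext d _ (fun i => rsum d (fun k => rsum d (fun l => u k * v i k * (u l * v i l))))).
  2:{ intros i Hi. unfold dot. rewrite sq_rsum. reflexivity. }
  rewrite rsum_swap. apply rsum_ext; intros k Hk. apply rsum_swap. }
transitivity (rsum d (fun k => rsum d (fun l => (1-c) * (if Nat.eqb l k then u k * u l else 0) + c*D*((u k * w k) * (u l * w l))))).
{ apply rsum_ext; intros k Hk; apply rsum_ext; intros l Hl.
  transitivity (u k * u l * Mv d v k l).
  { unfold Mv. rewrite <- rsum_scal. apply rsum_ext; intros; ring. }
  rewrite HM by auto. rewrite (Nat.eqb_sym l k). destruct (Nat.eqb k l); ring. }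
rewrite (rsum_ext d _ (fun k => (1-c) * (u k * u k) + c*D*rsum d (fun l => (u k * w k) * (u l * w l)))).
2:{ intros k Hk. rewrite rsum_plus, !rsum_scal, rsum_if by exact Hk. rewrite rsum_zero. ring. }
rewrite rsum_plus, !rsum_scal. unfold dot. rewrite (sq_rsum d (fun k => u k * w k)). reflexivity.
Qed.

Theorem mainTheorem16 (d : nat) (lambda : R) (v : nat -> nat -> R) (w : nat -> R)
  (alpha beta : R) :
  (3 <= d)%nat ->
  Rabs lambda <= 2 * sqrt (INR d - 1) ->
  (forall i, (i < d)%nat -> nrm2 d (v i) = 1) ->
  nrm2 d w = 1 ->
  (forall i j, (i < d)%nat -> (j < d)%nat -> i <> j ->
     dot d (v i) (v j) = (lambda ^ 2 - INR d) / (INR d * (INR d - 1))) ->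
  (forall i, (i < d)%nat -> dot d (v i) w = lambda / INR d) ->
  (forall i, (i < d)%nat ->
     dot d (lc alpha w beta (v i)) (lc alpha (v i) beta w) = 0 /\
     nrm2 d (lc alpha w beta (v i)) = 1 /\
     nrm2 d (lc alpha (v i) beta w) = 1) ->
  exists t1 t2 : R, 0 <= t1 /\ 0 <= t2 /\ t1 + t2 = 1 /\
    forall u : nat -> R,
      nrm2 d u =
      rsum d (fun i => t1 * (dot d u (lc alpha w beta (v i))) ^ 2
                     + t2 * (dot d u (lc alpha (v i) beta w)) ^ 2).
Proof.
intros Hd Hlam Hv Hw Hvv Hvw Hab.
unfold nrm2 in *.
set (D := INR d) in *.
set (lam := lambda) in *.
assert (HD3: 3 <= D) by (unfold D; replace 3 with (INR 3) by (simpl; ring); apply le_INR; lia).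
set (c := (lam ^ 2 - D) / (D * (D - 1))) in *.
assert (Hc: c * (D*(D-1)) = lam^2 - D) by (unfold c; field; lra).
assert (Hl2: lam^2 <= 4*(D-1)).
{ rewrite <- pow2_abs. pose proof (sqrt_sqrt (D-1) ltac:(lra)). pose proof (Rabs_pos lam).
  pose proof (sqrt_pos (D-1)). nra. }
destruct (key d lam v w c D eq_refl ltac:(lra) Hc Hv Hw Hvv Hvw) as [Hs Hq].
destruct (Hab 0%nat ltac:(lia)) as [E2 [E1 _]].
rewrite dot_lc_l, !dot_lc_r, (dot_sym d w (v 0%nat)), Hvw, Hw, Hv in E1, E2 by lia.
set (L := lam / D) in *.
assert (E1': alpha^2+beta^2 + 2*alpha*beta*L = 1) by (rewrite <- E1; ring).
assert (E2': (alpha^2+beta^2)*L + 2*alpha*beta = 0) by (rewrite <- E2; ring).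
assert (Hsig: (alpha^2+beta^2)*(1-L^2) = 1).
{ replace ((alpha^2+beta^2)*(1-L^2)) with ((alpha^2+beta^2 + 2*alpha*beta*L) - L*((alpha^2+beta^2)*L + 2*alpha*beta)) by ring.
  rewrite E1', E2'. ring. }
set (sig := alpha^2+beta^2) in *.
set (C := sig*(D-1)/D).
assert (HCc: C*(1-c) = 1).
{ transitivity (sig*(1-L^2)); [|exact Hsig]. unfold C, c, L. field. lra. }
assert (Hab2: alpha*beta = -sig*L/2) by lra.
assert (Hprod: (C-alpha^2)*(C-beta^2) <= 0).
{ assert (Ep: (C-alpha^2)*(C-beta^2) = sig^2 * (lam^2 - 4*(D-1)) / (4*D^2)).
  { transitivity (C^2 - C*sig + (alpha*beta)^2). { unfold sig; ring. } rewrite Hab2. unfold C, L. field. lra. }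
  rewrite Ep. assert (Hn: sig^2 * (lam^2 - 4*(D-1)) <= 0) by nra.
  assert (0 < /(4*D^2)) by (apply Rinv_0_lt_compat; nra). unfold Rdiv. nra. }
assert (Ht: exists t1, 0 <= t1 /\ 0 <= 1 - t1 /\ t1*beta^2 + (1-t1)*alpha^2 = C).
{ destruct (Req_dec (alpha^2) (beta^2)) as [Eq|Ne].
  - exists (1/2). rewrite <- Eq in Hprod |- *. assert (C = alpha^2) by nra. lra.
  - set (a2 := alpha^2) in *. set (b2 := beta^2) in *.
    assert (Hne: b2 - a2 <> 0) by lra.
    assert (Hden: 0 < (b2-a2)*(b2-a2)) by (pose proof (Rsqr_pos_lt (b2-a2) Hne); unfold Rsqr in *; lra).
    assert (Hpos: 0 < / ((b2-a2)*(b2-a2))) by (apply Rinv_0_lt_compat; exact Hden).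
    exists ((C-a2)/(b2-a2)). split; [|split].
    + replace ((C-a2)/(b2-a2)) with ((C-a2)*(b2-a2)*/((b2-a2)*(b2-a2))) by (field; lra).
      apply Rmult_le_pos; [nra|lra].
    + replace (1 - (C-a2)/(b2-a2)) with ((b2-C)*(b2-a2)*/((b2-a2)*(b2-a2))) by (field; lra).
      apply Rmult_le_pos; [nra|lra].
    + field. lra. }
destruct Ht as [t1 [Ht1 [Ht2 HC]]].
exists t1, (1-t1). split; [lra| split; [lra| split; [ring|]]].
intros u.
assert (Hsq: rsum d (fun i => dot d u (v i)) = lam * dot d u w).
{ transitivity (rsum d (fun k => rsum d (fun i => u k * v i k))).
  { rewrite rsum_swap. reflexivity. }
  rewrite (rsum_ext d _ (fun k => u k * (lam * w k))).
  2:{ intros k Hk. rewrite rsum_scal, Hs by exact Hk. reflexivity. }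
  rewrite (rsum_ext d _ (fun k => lam * (u k * w k))) by (intros; ring).
  rewrite rsum_scal. reflexivity. }
rewrite (rsum_ext d _ (fun i => (t1*alpha^2 + (1-t1)*beta^2)*(dot d u w)^2 + (2*alpha*beta*dot d u w) * dot d u (v i) + (t1*beta^2+(1-t1)*alpha^2) * (dot d u (v i))^2)).
2:{ intros i Hi. rewrite !dot_lc_r. ring. }
rewrite !rsum_plus, rsum_const, !rsum_scal, Hsq, Hq, HC.
assert (Hbr: D*(t1*alpha^2+(1-t1)*beta^2) + 2*alpha*beta*lam + C*c*D = 0).
{ replace (t1*alpha^2+(1-t1)*beta^2) with (sig - (t1*beta^2+(1-t1)*alpha^2)) by (unfold sig; ring).
  rewrite HC. replace lam with (L*D) by (unfold L; field; lra).
  transitivity (D*((sig + 2*alpha*beta*L) - C*(1-c))). { ring. }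
  rewrite E1', HCc. ring. }
transitivity (C*(1-c)*dot d u u + (dot d u w)^2 * (D*(t1*alpha^2+(1-t1)*beta^2) + 2*alpha*beta*lam + C*c*D)).
- rewrite HCc, Hbr. ring.
- unfold D. ring.
Qed.
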